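(* Let $a>0$ and let $P_+^a(x_i)$ denote the smallest $x>x_i$ at which the solution of $y'=-ay-\sin(3\pi x/2)$ with $y(x_i)=0$ vanishes. Then $P_+^a(\tfrac{10}{3})\in(4,\tfrac{14}{3})$ for all $a>0$. Moreover, for every $\delta_1>0$ (small) there exists $a_1>0$ (large) such that $P_+^a(\tfrac{10}{3})\in(4,4+\delta_1)$ for all $a\in(a_1,+\infty)$. *)

(* Defs.v *)
From Stdlib Require Export Reals.
Open Scope R_scope.

Definition is_sol (a xi : R) (y : R -> R) : Prop :=
  (forall x, derivable_pt_lim y x (- a * y x - sin (3 * PI * x / 2))) /\ y xi = 0.

Definition first_zero_after (y : R -> R) (xi p : R) : Prop :=
  xi < p /\ y p = 0 /\ (forall x, xi < x < p -> y x <> 0).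

(* Main.v *)
Require Import Defs.
From Stdlib Require Import Reals Lra.
From Coquelicot Require Import Coquelicot.
Open Scope R_scope.

Definition zf (a : R) (y : R -> R) x := exp (a*x) * y x.
Definition zpf (a x : R) := - exp (a*x) * sin (3*PI*x/2).

Lemma dexp a x : derivable_pt_lim (fun t => exp (a*t)) x (a * exp (a*x)).
Proof. apply is_derive_Reals. auto_derive; auto. ring. Qed.

Lemma z_deriv a y : is_sol a (10/3) y -> forall x, derivable_pt_lim (zf a y) x (zpf a x).
Proof.
  intros [Hd _] x. unfold zf, zpf.
  replace (-exp(a*x)*sin(3*PI*x/2)) with
    ((a*exp(a*x)) * y x + exp(a*x) * (-a*y x - sin(3*PI*x/2))) by ring.
  apply (derivable_pt_lim_mult (fun t => exp(a*t)) y x). apply dexp. apply Hd.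
Qed.

Lemma mvt f f' a b : a < b -> (forall x, derivable_pt_lim f x (f' x)) ->
  exists c, a < c < b /\ f b - f a = f' c * (b - a).
Proof.
  intros Hab Hd. destruct (MVT_cor2 f f' a b Hab) as [c [H1 H2]].
  intros; apply Hd. exists c; split; auto.
Qed.

Lemma sin_shift x : sin (3*PI*x/2) = sin (3*PI*(x-4)/2).
Proof.
  replace (3*PI*x/2) with (3*PI*(x-4)/2 + 2*INR 3*PI) by (simpl; field).
  apply sin_period.
Qed.

Lemma zp_pos1 a x : 10/3 < x < 4 -> 0 < zpf a x.
Proof.
  intros Hx. unfold zpf. rewrite sin_shift.
  assert (sin (3*PI*(x-4)/2) < 0).
  { pose proof PI_RGT_0. apply sin_lt_0_var; nra. }
  pose proof (exp_pos (a*x)). nra.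
Qed.

Lemma zp_neg2 a x : 4 < x < 14/3 -> zpf a x < 0.
Proof.
  intros Hx. unfold zpf. rewrite sin_shift.
  assert (0 < sin (3*PI*(x-4)/2)).
  { pose proof PI_RGT_0. apply sin_gt_0; nra. }
  pose proof (exp_pos (a*x)). nra.
Qed.

Lemma zpf_shift a x : zpf a (x + 2/3) = - exp (2*a/3) * zpf a x.
Proof.
  unfold zpf.
  replace (a*(x+2/3)) with (a*x + 2*a/3) by field. rewrite exp_plus.
  replace (3*PI*(x+2/3)/2) with (3*PI*x/2 + PI) by field. rewrite neg_sin. ring.
Qed.

Lemma z_key a y : is_sol a (10/3) y -> zf a y (14/3) = zf a y 4 * (1 - exp (2*a/3)).
Proof.
  intros Hs. pose proof (z_deriv a y Hs) as Hz.
  set (E := exp (2*a/3)).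
  set (w := fun x => zf a y (x + 2/3) + E * zf a y x).
  assert (Hw : forall x, derivable_pt_lim w x 0).
  { intro x. unfold w.
    replace 0 with (zpf a (x+2/3) * 1 + (0 * zf a y x + E * zpf a x)).
    2:{ rewrite zpf_shift. unfold E. ring. }
    apply (derivable_pt_lim_plus (fun t => zf a y (t + 2/3)) (fun t => E * zf a y t)).
    - apply (derivable_pt_lim_comp (fun t => t + 2/3) (zf a y) x 1).
      + apply is_derive_Reals. auto_derive; auto.
      + apply Hz.
    - apply (derivable_pt_lim_mult (fun _ => E) (zf a y)).
      + apply derivable_pt_lim_const.
      + apply Hz. }
  destruct (mvt w (fun _ => 0) (10/3) 4) as [c [_ Hc]]; [lra|exact Hw|].
  unfold w in Hc.
  replace (10/3+2/3) with 4 in Hc by field.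
  replace (4+2/3) with (14/3) in Hc by field.
  assert (zf a y (10/3) = 0). { unfold zf. destruct Hs as [_ H0]. rewrite H0. ring. }
  rewrite H in Hc. lra.
Qed.

Lemma z_at a y : is_sol a (10/3) y -> zf a y (10/3) = 0.
Proof. intros [_ H0]. unfold zf. rewrite H0. ring. Qed.

Lemma z4_pos a y : is_sol a (10/3) y -> 0 < zf a y 4.
Proof.
  intros Hs. destruct (mvt (zf a y) (zpf a) (10/3) 4) as [c [Hc Hc2]];
    [lra| apply z_deriv; auto|].
  rewrite z_at in Hc2 by auto. pose proof (zp_pos1 a c Hc). nra.
Qed.

Lemma part1 a y : 0 < a -> is_sol a (10/3) y ->
  exists p, 4 < p < 14/3 /\ zf a y p = 0 /\ forall x, 10/3 < x < p -> 0 < zf a y x.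
Proof.
  intros Ha Hs. pose proof (z4_pos a y Hs) as H4. pose proof (z_key a y Hs) as Hk.
  assert (HE : 1 < exp (2*a/3)). { rewrite <- exp_0. apply exp_increasing. lra. }
  assert (H14 : zf a y (14/3) < 0). { rewrite Hk. nra. }
  pose proof (z_deriv a y Hs) as Hz.
  assert (Hc : continuity (fun t => - zf a y t)).
  { intro x. apply continuity_pt_opp. apply derivable_continuous_pt.
    exists (zpf a x). apply Hz. }
  destruct (IVT _ 4 (14/3) Hc) as [p [Hp Hp0]]; [lra|lra|lra|].
  assert (Hp1 : zf a y p = 0) by lra.
  assert (4 < p).
  { destruct (Req_dec p 4) as [e|]; [subst; lra|lra]. }
  assert (p < 14/3).
  { destruct (Req_dec p (14/3)) as [e|]; [rewrite e in Hp1; lra|lra]. }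
  exists p. split; [lra|split; auto].
  intros x Hx.
  destruct (Rle_lt_dec x 4).
  - destruct (Req_dec x 4) as [e|]; [subst; lra|].
    destruct (mvt (zf a y) (zpf a) (10/3) x) as [c [Hc1 Hc2]]; [lra|auto|].
    rewrite z_at in Hc2 by auto. pose proof (zp_pos1 a c ltac:(lra)). nra.
  - destruct (mvt (zf a y) (zpf a) x p) as [c [Hc1 Hc2]]; [lra|auto|].
    pose proof (zp_neg2 a c ltac:(lra)). nra.
Qed.

Lemma y_of_z a y x : zf a y x <> 0 -> y x <> 0.
Proof. unfold zf. intros H e. rewrite e in H. apply H; ring. Qed.

Lemma y_zero a y x : zf a y x = 0 -> y x = 0.
Proof.
  unfold zf. intros H. pose proof (exp_pos (a*x)).
  destruct (Rmult_integral _ _ H); [lra|auto].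
Qed.

Lemma z4_bound a y : 0 < a -> is_sol a (10/3) y -> zf a y 4 < exp (4*a) / a.
Proof.
  intros Ha Hs.
  set (h := fun x => zf a y x - exp (a*x) / a).
  assert (Hh : forall x, derivable_pt_lim h x (zpf a x - exp (a*x))).
  { intro x. apply (derivable_pt_lim_minus (zf a y) (fun t => exp (a*t)/a)).
    - apply z_deriv; auto.
    - apply is_derive_Reals. auto_derive; auto. field. lra. }
  destruct (mvt h _ (10/3) 4 ltac:(lra) Hh) as [c [Hc1 Hc2]].
  unfold h in Hc2. rewrite z_at in Hc2 by auto.
  assert (zpf a c <= exp (a*c)).
  { unfold zpf. pose proof (SIN_bound (3*PI*c/2)). pose proof (exp_pos (a*c)). nra. }
  assert (0 < exp (a*(10/3)) / a). { apply Rdiv_lt_0_compat; auto. apply exp_pos. }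
  replace (4*a) with (a*4) by ring. nra.
Qed.

Lemma zd_neg a y d : 0 < a -> is_sol a (10/3) y -> 0 < d <= 1/3 ->
  2 / (sin (3*PI*d/4) * d) < a -> zf a y (4+d) < 0.
Proof.
  intros Ha Hs Hd Hlarge. pose proof PI_RGT_0 as HPI.
  set (K := sin (3*PI*d/4)) in *.
  assert (HK : 0 < K). { apply sin_gt_0; nra. }
  pose proof (z4_bound a y Ha Hs) as HA.
  destruct (mvt (zf a y) (zpf a) 4 (4+d/2)) as [c1 [Hc1 Hc1e]]; [lra|apply z_deriv; auto|].
  pose proof (zp_neg2 a c1 ltac:(lra)).
  destruct (mvt (zf a y) (zpf a) (4+d/2) (4+d)) as [c [Hc Hce]]; [lra|apply z_deriv; auto|].
  assert (Hs1 : K <= sin (3*PI*(c-4)/2)).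
  { apply sin_incr_1; nra. }
  assert (He : exp (4*a) <= exp (a*c)).
  { apply Rlt_le, exp_increasing. nra. }
  assert (Hzc : zpf a c <= - exp (4*a) * K).
  { unfold zpf. rewrite sin_shift. pose proof (exp_pos (4*a)). nra. }
  assert (Hinv : 1/a < K*d/2).
  { assert (0 < K*d) by nra.
    assert (2 < a * (K*d)).
    { apply (Rmult_lt_compat_r (K*d)) in Hlarge; auto.
      replace (2/(K*d)*(K*d)) with 2 in Hlarge by (field; lra). lra. }
    apply (Rmult_lt_reg_r a); auto. replace (1/a*a) with 1 by (field; lra). nra. }
  pose proof (exp_pos (4*a)).
  assert (exp (4*a) / a = exp (4*a) * (1/a)) by (field; lra).
  nra.
Qed.

Lemma fz a y p : 4 < p -> zf a y p = 0 -> (forall x, 10/3 < x < p -> 0 < zf a y x) ->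
  first_zero_after y (10/3) p.
Proof.
  intros H1 H2 H3. split; [lra|split]. eapply y_zero; eauto.
  intros x Hx. apply (y_of_z a). specialize (H3 x Hx). lra.
Qed.

Theorem lemma4 :
  (forall (a : R), 0 < a ->
     forall y : R -> R, is_sol a (10/3) y ->
       exists p, first_zero_after y (10/3) p /\ 4 < p < 14/3) /\
  (forall d1 : R, 0 < d1 ->
     exists a1 : R, 0 < a1 /\
       forall (a : R), a1 < a ->
         forall y : R -> R, is_sol a (10/3) y ->
           exists p, first_zero_after y (10/3) p /\ 4 < p < 4 + d1).
Proof.
  split.
  - intros a Ha y Hs. destruct (part1 a y Ha Hs) as [p [Hp [Hp0 Hpos]]].
    exists p. split; [apply (fz a); auto; lra|lra].
  - intros d1 Hd1. pose proof PI_RGT_0 as HPI.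
    set (d := Rmin d1 (1/3)).
    assert (Hd : 0 < d <= 1/3 /\ d <= d1).
    { unfold d. split; [split|]. apply Rmin_glb_lt; lra. apply Rmin_r. apply Rmin_l. }
    assert (HK : 0 < sin (3*PI*d/4)). { apply sin_gt_0; nra. }
    exists (2 / (sin (3*PI*d/4) * d)). split.
    { apply Rdiv_lt_0_compat; nra. }
    intros a Ha y Hs.
    assert (Ha0 : 0 < a).
    { assert (0 < 2 / (sin (3*PI*d/4) * d)) by (apply Rdiv_lt_0_compat; nra). lra. }
    destruct (part1 a y Ha0 Hs) as [p [Hp [Hp0 Hpos]]].
    pose proof (zd_neg a y d Ha0 Hs (proj1 Hd) Ha).
    exists p. split; [apply (fz a); auto; lra|].
    split; [lra|].
    destruct (Rlt_le_dec p (4+d)); [lra|].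
    destruct (Req_dec p (4+d)) as [e|].
    + rewrite <- e in H. lra.
    + specialize (Hpos (4+d) ltac:(lra)). lra.
Qed.
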